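(* Let $V$ be a simple $\mathcal{R}$-module. If there exist a nonzero vector $v\in V$ and $M\in\mathbb{Z}_+$ such that $L_mv=G_mv=0$ for all $m\geq M$, then $V$ is a smooth module.
   Context: The Ramond algebra $\mathcal{R}=\mathcal{R}_{\bar 0}\oplus\mathcal{R}_{\bar 1}$ is the Lie superalgebra with basis $\{L_m,G_m,c\mid m\in\mathbb{Z}\}$, where $\mathcal{R}_{\bar 0}=\mathrm{span}\{L_m,c\}$, $\mathcal{R}_{\bar 1}=\mathrm{span}\{G_m\}$, and brackets $[L_m,L_n]=(m-n)L_{m+n}+\delta_{m+n,0}\frac{m^3-m}{12}c$, $[L_m,G_n]=(\frac m2-n)G_{m+n}$, $[G_m,G_n]=2L_{m+n}+\frac13\delta_{m+n,0}(m^2-\frac14)c$, $[\mathcal{R},c]=0$. Modules are $\mathbb{Z}_2$-graded (super)modules. For $m\in\mathbb{Z}$ let $\mathcal{R}_m=\mathrm{span}\{L_m,G_m,\delta_{m,0}c\}$. An $\mathcal{R}$-module is smooth if for every vector $u$ there is $n\in\mathbb{N}$ with $\mathcal{R}_mu=0$ for all $m>n$. *)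

(* Defs.v *)
From HB Require Import structures.
From mathcomp Require Import all_boot all_order all_algebra.
Set Implicit Arguments. Unset Strict Implicit. Unset Printing Implicit Defensive.
Import Order.TTheory GRing.Theory Num.Theory.
Local Open Scope ring_scope.

Definition subspace (K : fieldType) (V : lmodType K) (W : V -> Prop) : Prop :=
  W 0 /\ (forall (a : K) (x y : V), W x -> W y -> W (a *: x + y)).

Definition linear_map (K : fieldType) (V : lmodType K) (f : V -> V) : Prop :=
  forall (a : K) (x y : V), f (a *: x + y) = a *: f x + f y.

Record ramond_module (K : fieldType) (V : lmodType K) := RamondModule {
  V0 : V -> Prop;
  V1 : V -> Prop;
  L : int -> V -> V;
  G : int -> V -> V;
  C : V -> V;
  V0_sub : subspace V0;
  V1_sub : subspace V1;
  V_decomp : forall v : V, exists v0 v1, V0 v0 /\ V1 v1 /\ v = v0 + v1;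
  V_direct : forall v : V, V0 v -> V1 v -> v = 0;
  L_lin : forall m, linear_map (L m);
  G_lin : forall m, linear_map (G m);
  C_lin : linear_map C;
  L_even0 : forall m v, V0 v -> V0 (L m v);
  L_even1 : forall m v, V1 v -> V1 (L m v);
  C_even0 : forall v, V0 v -> V0 (C v);
  C_even1 : forall v, V1 v -> V1 (C v);
  G_odd0 : forall m v, V0 v -> V1 (G m v);
  G_odd1 : forall m v, V1 v -> V0 (G m v);
  LL_rel : forall (m n : int) (v : V),
    L m (L n v) - L n (L m v) =
      (m - n)%:~R *: L (m + n) v
      + (if m + n == 0 then ((m ^+ 3 - m)%:~R / 12%:R) *: C v else 0);
  LG_rel : forall (m n : int) (v : V),
    L m (G n v) - G n (L m v) = (m%:~R / 2%:R - n%:~R) *: G (m + n) v;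
  GG_rel : forall (m n : int) (v : V),
    G m (G n v) + G n (G m v) =
      2%:R *: L (m + n) v
      + (if m + n == 0 then ((m%:~R ^+ 2 - 1 / 4%:R) / 3%:R) *: C v else 0);
  CL_rel : forall m v, C (L m v) = L m (C v);
  CG_rel : forall m v, C (G m v) = G m (C v)
}.

(* Submodules of a supermodule are Z_2-graded submodules. *)
Definition graded_submodule (K : fieldType) (V : lmodType K)
    (M : ramond_module V) (W : V -> Prop) : Prop :=
  [/\ subspace W,
      (forall m w, W w -> W (L M m w)),
      (forall m w, W w -> W (G M m w)),
      (forall w, W w -> W (C M w)) &
      (forall w, W w -> exists w0 w1,
          [/\ V0 M w0, V1 M w1, W w0, W w1 & w = w0 + w1])].

Definition simple_module (K : fieldType) (V : lmodType K) (M : ramond_module V) : Prop :=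
  (exists v : V, v != 0) /\
  (forall W : V -> Prop, graded_submodule M W ->
     (forall w, W w -> w = 0) \/ (forall w, W w)).

(* Smooth: every u is killed by R_m = span{L_m, G_m, delta_{m,0} c} for m > n. *)
Definition smooth_module (K : fieldType) (V : lmodType K) (M : ramond_module V) : Prop :=
  forall u : V, exists n : nat, forall m : int, (n%:Z < m)%R ->
    [/\ L M m u = 0, G M m u = 0 & (m = 0 -> C M u = 0)].

(* Main.v *)
Require Import Defs.
From HB Require Import structures.
From mathcomp Require Import all_boot all_order all_algebra.
From mathcomp Require Import zify.
Import Order.TTheory GRing.Theory Num.Theory.
Local Open Scope ring_scope.

Section Aux.
Variables (K : fieldType) (V : lmodType K).

Lemma lin0 (f : V -> V) : linear_map f -> f 0 = 0.
Proof.
move=> H; have := H (-1) 0 0.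
by rewrite scaler0 addr0 scaleN1r addNr.
Qed.

Lemma linD (f : V -> V) x y : linear_map f -> f (x + y) = f x + f y.
Proof. by move=> H; have := H 1 x y; rewrite !scale1r. Qed.

Lemma linZ (f : V -> V) a x : linear_map f -> f (a *: x) = a *: f x.
Proof. by move=> H; have := H a x 0; rewrite (lin0 _ H) !addr0. Qed.

Lemma subN (W : V -> Prop) x : subspace W -> W x -> W (- x).
Proof. by move=> [H0 H] Hx; have := H (-1) x 0 Hx H0; rewrite scaleN1r addr0. Qed.

Variable M : ramond_module V.

Lemma split0 a0 a1 : V0 M a0 -> V1 M a1 -> a0 + a1 = 0 -> a0 = 0 /\ a1 = 0.
Proof.
move=> H0 H1 /eqP; rewrite addr_eq0 => /eqP E.
have Ha : a0 = 0 by apply: (@V_direct _ _ M); rewrite // E; apply: subN => //; exact: V1_sub.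
by split => //; move: E; rewrite Ha => /eqP; rewrite eq_sym oppr_eq0 => /eqP.
Qed.

Definition Wb (n : nat) (u : V) :=
  forall m : int, n%:Z < m -> L M m u = 0 /\ G M m u = 0.

Lemma W_L n k u : Wb n u -> Wb (n + absz k) (L M k u).
Proof.
move=> H m Hm.
have h1 : n%:Z < m by lia.
have h2 : n%:Z < m + k by lia.
have h3 : (m + k == 0) = false by apply/eqP; lia.
split.
- have := LL_rel M m k u.
  by rewrite h3 addr0 (H m h1).1 (H _ h2).1 lin0 ?scaler0 ?subr0 //; apply: L_lin.
- have := LG_rel M k m u.
  rewrite (H m h1).2 lin0; last by apply: L_lin.
  rewrite (addrC k m) (H _ h2).2 scaler0 sub0r => /eqP; rewrite oppr_eq0 => /eqP.
  done.
Qed.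

Lemma W_G n k u : Wb n u -> Wb (n + absz k) (G M k u).
Proof.
move=> H m Hm.
have h1 : n%:Z < m by lia.
have h2 : n%:Z < m + k by lia.
have h3 : (m + k == 0) = false by apply/eqP; lia.
split.
- have := LG_rel M m k u.
  rewrite (H m h1).1 lin0; last by apply: G_lin.
  by rewrite (H _ h2).2 scaler0 subr0.
- have := GG_rel M m k u.
  rewrite (H m h1).2 lin0; last by apply: G_lin.
  by rewrite addr0 h3 addr0 (H _ h2).1 scaler0.
Qed.

Lemma W_C n u : Wb n u -> Wb n (C M u).
Proof.
move=> H m Hm; rewrite -CL_rel -CG_rel (H m Hm).1 (H m Hm).2 lin0 //; exact: C_lin.
Qed.

Definition W (u : V) := exists n, Wb n u.

Lemma W_graded : graded_submodule M W.
Proof.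
split.
- split.
  + exists 0%N => m _; rewrite !lin0 //; [exact: G_lin | exact: L_lin].
  + move=> a x y [nx Hx] [ny Hy]; exists (nx + ny)%N => m Hm.
    have hx : nx%:Z < m by lia.
    have hy : ny%:Z < m by lia.
    rewrite (L_lin M) (G_lin M) (Hx m hx).1 (Hx m hx).2 (Hy m hy).1 (Hy m hy).2.
    by rewrite scaler0 addr0.
- by move=> m w [n H]; exists (n + absz m)%N; apply: W_L.
- by move=> m w [n H]; exists (n + absz m)%N; apply: W_G.
- by move=> w [n H]; exists n; apply: W_C.
- move=> w [n H].
  have [w0 [w1 [H0 [H1 E]]]] := V_decomp M w.
  have key : forall m : int, n%:Z < m ->
      (L M m w0 = 0 /\ L M m w1 = 0) /\ (G M m w0 = 0 /\ G M m w1 = 0).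
    move=> m Hm; have [HL HG] := H m Hm; split.
    + apply: split0; [exact: L_even0 | exact: L_even1 |].
      by rewrite -linD -?E //; exact: L_lin.
    + have [a b] : G M m w1 = 0 /\ G M m w0 = 0.
        apply: split0; [exact: G_odd1 | exact: G_odd0 |].
        by rewrite addrC -linD -?E //; exact: G_lin.
      by [].
  exists w0, w1; split => //.
  + by exists n => m Hm; have [[? _] [? _]] := key m Hm.
  + by exists n => m Hm; have [[_ ?] [_ ?]] := key m Hm.
Qed.

End Aux.

Theorem lemma4p2 (K : numClosedFieldType) (V : lmodType K) (M : ramond_module V) :
  simple_module M ->
  (exists (v : V) (N : nat), v != 0 /\ (0 < N)%N /\
     forall m : int, (N%:Z <= m)%R -> L M m v = 0 /\ G M m v = 0) ->
  smooth_module M.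
Proof.
move=> [_ Hs] [v [N [Hv [_ HN]]]].
have Wv : @W _ _ M v by exists N => m Hm; apply: HN; exact: ltW.
case: (Hs _ (@W_graded _ _ M)) => [H0|Hall].
  by move: Hv; rewrite (H0 v Wv) eqxx.
move=> u; have [n Hn] := Hall u; exists n => m Hm.
have [a b] := Hn m Hm; split => // Em; move: Hm; rewrite Em; lia.
Qed.
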